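(* Let $G$ be a finite group and $S$ the Monster group $M$ or the Baby Monster group $B$. If $|G| = |S|$, then $G$ is neither a Frobenius group nor a 2-Frobenius group.
   Context: A finite group $G$ is a 2-Frobenius group if it has a normal series $1 \trianglelefteq A \trianglelefteq B' \trianglelefteq G$ such that $B'$ is a Frobenius group with Frobenius kernel $A$ and $G/A$ is a Frobenius group with Frobenius kernel $B'/A$. Orders: $|M|=2^{46}\cdot3^{20}\cdot5^9\cdot7^6\cdot11^2\cdot13^3\cdot17\cdot19\cdot23\cdot29\cdot31\cdot41\cdot47\cdot59\cdot71$, $|B|=2^{41}\cdot3^{13}\cdot5^6\cdot7^2\cdot11\cdot13\cdot17\cdot19\cdot23\cdot31\cdot47$. *)

(* Defs.v *)
From mathcomp Require Import all_boot all_fingroup all_solvable.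
Set Implicit Arguments. Unset Strict Implicit. Unset Printing Implicit Defensive.
Local Open Scope group_scope.

Definition Monster_order : nat :=
  (2^46 * 3^20 * 5^9 * 7^6 * 11^2 * 13^3 * 17 * 19 * 23 * 29 * 31 * 41 * 47 * 59 * 71)%N.

Definition BabyMonster_order : nat :=
  (2^41 * 3^13 * 5^6 * 7^2 * 11 * 13 * 17 * 19 * 23 * 31 * 47)%N.

Definition two_Frobenius (gT : finGroupType) (G : {group gT}) : Prop :=
  exists (A B' : {group gT}),
    [/\ A <| G, B' <| G, A \subset B',
        [Frobenius B' with kernel A] &
        [Frobenius (G / A) with kernel (B' / A)]].

(* Main.v *)
From Stdlib Require Import ZArith Lia.
Require Import Defs.
From mathcomp Require Import all_boot all_fingroup all_solvable.
From mathcomp Require Import zify.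
From mathcomp Require vcharacter.
Set Implicit Arguments. Unset Strict Implicit. Unset Printing Implicit Defensive.


Fixpoint expmod (p f q : nat) : nat := if f is f'.+1 then (expmod p f' q * p) %% q else 1 %% q.
Definition dvb q p f := expmod p f q == 1 %% q.

Lemma expmodE p f q : expmod p f q = p ^ f %% q.
Proof. elim: f => [|f IH] //=. by rewrite IH modnMml expnSr. Qed.

Lemma dvbE q p f : 0 < p -> dvb q p f = (q %| p ^ f - 1).
Proof.
move=> p0; rewrite /dvb expmodE eq_sym -eqn_mod_dvd //.
by rewrite expn_gt0 p0.
Qed.

Section Chk.
Variables (ex : nat -> nat) (d : nat -> nat -> nat -> bool).
Definition cand (T : seq nat) y := all (fun x => d y x (ex x)) T.
Definition full (T : seq nat) y := all (fun x => d x y (ex y)) T.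
Definition weak (T : seq nat) y := has (fun f => all (fun x => d x y f) T) (iota 1 (ex y)).
Definition surv2 (T R : seq nat) :=
  if T is [::] then false else
  if ~~ has (cand T) R then false else
  if ~~ all (fun y => if cand T y then true else full T y) R then false else
  has (fun y => if cand T y then weak T y else true) R.
Definition survF (T R : seq nat) :=
  if T is [::] then false else if R is [::] then false else all (full T) R.
Fixpoint chk (s : seq nat) (T R : seq nat) (sv : seq nat -> seq nat -> bool) : bool :=
  if s is x :: s' then (if chk s' (rcons T x) R sv then chk s' T (rcons R x) sv else false) else sv T R.

Lemma chk_sound s T R sv (P : pred nat) :
  chk s T R sv -> sv (T ++ filter P s) (R ++ filter (predC P) s).
Proof.
elim: s T R => [|x s IH] T R /=; first by rewrite !cats0.
case H1: (chk s (rcons T x) R sv) => // H2.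
case: (P x) => /=.
  by have := IH _ _ H1; rewrite cat_rcons.
by have := IH _ _ H2; rewrite cat_rcons.
Qed.

Variables (idx : seq nat).

Lemma surv2_sound (fA fB fC : pred nat) (fa : nat -> nat) :
  {in idx, forall i, [|| fA i, fB i | fC i]} ->
  {in idx, forall i, fB i -> ~~ fA i && ~~ fC i} ->
  has fA idx -> has fB idx -> has fC idx ->
  {in idx &, forall q p, fC q -> fB p -> d q p (ex p)} ->
  {in idx &, forall q p, fB q -> fA p -> d q p (fa p)} ->
  {in idx, forall p, fA p -> ~~ fC p -> fa p = ex p} ->
  {in idx, forall p, fA p -> 0 < fa p <= ex p} ->
  surv2 (filter fB idx) (filter (predC fB) idx).
Proof.
move=> h1 h2 hA hB hC h4 h5 h6 h7.
set T := filter fB idx; set R := filter (predC fB) idx.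
have inT x : x \in T -> fB x /\ x \in idx by rewrite mem_filter => /andP.
have inR x : x \in idx -> ~~ fB x -> x \in R by move=> ? ?; rewrite mem_filter /= andbC; apply/andP.
have Cc y : y \in idx -> fC y -> cand T y.
  move=> yi fy; apply/allP=> x /inT[fx xi]; exact: h4.
have nB y : y \in idx -> fC y || fA y -> ~~ fB y.
  move=> yi; apply: contraTN => fy; have /andP[/negbTE-> /negbTE->] := h2 y yi fy; done.
have F1 : has (cand T) R.
  have /hasP[y yi fy] := hC; apply/hasP; exists y.
    by apply: (inR y yi); apply: (nB y yi); rewrite fy.
  exact: Cc yi fy.
have F2 : all (fun y => if cand T y then true else full T y) R.
  apply/allP=> y; rewrite mem_filter /= => /andP[ny yi].
  case cy: (cand T y) => //.
  have fCy : ~~ fC y by apply: contraFN cy; exact: Cc.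
  have fAy : fA y by case/or3P: (h1 y yi) => // H; [rewrite H in ny | rewrite H in fCy].
  apply/allP=> x /inT[fx xi]; rewrite -(h6 y yi fAy fCy); exact: h5.
have F3 : has (fun y => if cand T y then weak T y else true) R.
  have /hasP[y yi fy] := hA; apply/hasP; exists y.
    by apply: (inR y yi); apply: (nB y yi); rewrite fy orbT.
  case: (cand T y) => //; apply/hasP; exists (fa y).
    by rewrite mem_iota add1n ltnS; exact: h7.
  apply/allP=> x /inT[fx xi]; exact: h5.
have nT : T != [::] by rewrite -has_filter.
rewrite /surv2; move: nT F1 F2 F3; clear inT Cc; case: T => // t T' _ -> -> -> //.
Qed.

Lemma survF_sound (fH fK : pred nat) :
  has fH idx -> has fK idx -> {in idx, forall i, fK i -> ~~ fH i} ->
  {in idx &, forall q p, fH q -> ~~ fH p -> d q p (ex p)} ->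
  survF (filter fH idx) (filter (predC fH) idx).
Proof.
move=> hH hK hKH h4.
set T := filter fH idx; set R := filter (predC fH) idx.
have nT : T != [::] by rewrite -has_filter.
have nR : R != [::].
  rewrite -has_filter; have /hasP[y yi fy] := hK; apply/hasP; exists y => //.
  exact: hKH.
have F : all (full T) R.
  apply/allP => y; rewrite mem_filter /= => /andP[ny yi]; apply/allP => x.
  rewrite mem_filter => /andP[fx xi]; exact: h4.
by rewrite /survF; move: nT nR F; case: T => // t T' _; case: R.
Qed.
End Chk.

Definition mktbl (prs exs : seq nat) :=
  [seq [seq [seq dvb (nth 0 prs i) (nth 0 prs j) f | f <- iota 0 (nth 0 exs j).+1] | j <- iota 0 (size prs)] | i <- iota 0 (size prs)].
Definition look (tbl : seq (seq (seq bool))) i j f := nth false (nth [::] (nth [::] tbl i) j) f.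

Lemma look_mktbl prs exs i j f : i < size prs -> j < size prs -> f <= nth 0 exs j ->
  look (mktbl prs exs) i j f = dvb (nth 0 prs i) (nth 0 prs j) f.
Proof.
move=> ip jp fe; rewrite /look /mktbl (nth_map 0) ?size_iota // nth_iota //.
rewrite (nth_map 0) ?size_iota // nth_iota // (nth_map 0) ?size_iota ?ltnS //.
by rewrite nth_iota ?ltnS.
Qed.

Definition check2 prs exs := let tbl := mktbl prs exs in
  chk (iota 0 (size prs)) [::] [::] (fun T R => if surv2 (nth 0 exs) (look tbl) T R then T == [:: 0] else true).
Definition checkF prs exs := let tbl := mktbl prs exs in
  chk (iota 0 (size prs)) [::] [::] (fun T R => if survF (nth 0 exs) (look tbl) T R then T == [:: 0] else true).

Lemma logn0 p m : ~~ (p %| m) -> logn p m = 0.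
Proof. by move=> h; rewrite lognE (negbTE h) !andbF. Qed.

Lemma prime_coprime_dvd p x y : prime p -> coprime x y -> p %| x -> p %| y -> False.
Proof.
move=> pp cxy px py; have: p %| gcdn x y by rewrite dvdn_gcd px py.
by rewrite (eqP cxy) dvdn1 => /eqP p1; rewrite p1 in pp.
Qed.

Section Arith.
Variables (prs exs : seq nat) (n : nat).
Hypothesis Hpr : forall i, i < size prs -> prime (nth 0 prs i).
Hypothesis Hex : forall i, i < size prs -> 0 < nth 0 exs i.
Hypothesis Hlog : forall i, i < size prs -> logn (nth 0 prs i) n = nth 0 exs i.
Hypothesis Hdiv : forall p, prime p -> p %| n -> exists2 i, i < size prs & p = nth 0 prs i.

Local Notation idx := (iota 0 (size prs)).
Local Notation pr i := (nth 0 prs i).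

Lemma pr_dvd i : i < size prs -> pr i %| n.
Proof.
move=> ip; have := Hex ip; rewrite -Hlog // logn_gt0 mem_primes.
by case/and3P.
Qed.

Lemma has_dvd x : 1 < x -> x %| n -> has (fun i => pr i %| x) idx.
Proof.
move=> x1 xn; have pp := pdiv_prime x1; have px := pdiv_dvd x.
have [i ip E] := Hdiv pp (dvdn_trans px xn).
by apply/hasP; exists i; rewrite ?mem_iota // -E.
Qed.

Lemma arithF h k : h * k = n -> coprime k h -> 1 < h -> 1 < k ->
  (forall q p, prime q -> q %| h -> prime p -> q %| p ^ logn p k - 1) -> checkF prs exs ->
  forall p, prime p -> p %| h -> p = pr 0.
Proof.
move=> hk ckh h1 k1 pp chkd.
have h0 : 0 < h by apply: ltnW. have k0 : 0 < k by apply: ltnW.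
have := chk_sound (fun i => pr i %| h) chkd; rewrite !cat0s.
rewrite (@survF_sound _ _ _ _ (fun i => pr i %| k)); first last.
- move=> q p; rewrite !mem_iota !add0n => /andP[_ qi] /andP[_ pi] fq fp.
  rewrite look_mktbl // dvbE; last exact: prime_gt0 (Hpr pi).
  have -> : nth 0 exs p = logn (pr p) k.
    by rewrite -Hlog // -hk lognM // (logn0 fp).
  exact: pp (Hpr qi) fq (Hpr pi).
- move=> i; rewrite mem_iota add0n => /andP[_ ip] fk; apply/negP => fh.
  exact: prime_coprime_dvd (Hpr ip) ckh fk fh.
- by apply: has_dvd; rewrite // -hk dvdn_mull.
- by apply: has_dvd; rewrite // -hk dvdn_mulr.
move/eqP=> E p pp' ph.
have pn : p %| n by rewrite -hk dvdn_mulr.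
have [i ip pE] := Hdiv pp' pn.
have : i \in filter (fun i => pr i %| h) idx by rewrite mem_filter mem_iota add0n ip -pE ph.
by rewrite E inE => /eqP i0; rewrite pE i0.
Qed.
Lemma arith2 a b c : a * b * c = n -> coprime a b -> coprime b c -> 1 < a -> 1 < b -> 1 < c ->
  (forall q p, prime q -> q %| b -> prime p -> q %| p ^ logn p a - 1) ->
  (forall q p, prime q -> q %| c -> prime p -> q %| p ^ logn p b - 1) -> check2 prs exs ->
  forall p, prime p -> p %| b -> p = pr 0.
Proof.
move=> abc cab cbc a1 b1 c1 pp1 pp2 chkd.
have a0 : 0 < a by apply: ltnW. have b0 : 0 < b by apply: ltnW.
have c0 : 0 < c by apply: ltnW.
have lg p : logn p n = logn p a + logn p b + logn p c.
  by rewrite -abc !lognM ?muln_gt0 ?a0 ?b0.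
have dA : a %| n by rewrite -abc -mulnA; apply: dvdn_mulr.
have dB : b %| n by rewrite -abc mulnAC; apply: dvdn_mull.
have n0 : 0 < n by rewrite -abc !muln_gt0 a0 b0 c0.
have dC : c %| n by rewrite -abc; apply: dvdn_mull.
have := chk_sound (fun i => pr i %| b) chkd; rewrite !cat0s.
rewrite (@surv2_sound _ _ _ (fun i => pr i %| a) _ (fun i => pr i %| c) (fun i => logn (pr i) a)); first last.
- move=> p; rewrite mem_iota add0n => /andP[_ pi] fa.
  rewrite logn_gt0 mem_primes Hpr // a0 fa /= -Hlog //.
  exact: (dvdn_leq_log _ n0 dA).
- move=> p; rewrite mem_iota add0n => /andP[_ pi] fa fc.
  have fb : ~~ (pr p %| b) by apply/negP => fb; exact: prime_coprime_dvd (Hpr pi) cab fa fb.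
  by rewrite -Hlog // lg (logn0 fb) (logn0 fc) !addn0.
- move=> q p; rewrite !mem_iota !add0n => /andP[_ qi] /andP[_ pi] fq fp.
  rewrite look_mktbl //; last by rewrite -Hlog //; exact: (dvdn_leq_log _ n0 dA).
  rewrite dvbE; last exact: prime_gt0 (Hpr pi).
  exact: pp1 (Hpr qi) fq (Hpr pi).
- move=> q p; rewrite !mem_iota !add0n => /andP[_ qi] /andP[_ pi] fq fp.
  rewrite look_mktbl // dvbE; last exact: prime_gt0 (Hpr pi).
  have -> : nth 0 exs p = logn (pr p) b.
    have fa : ~~ (pr p %| a) by apply/negP => fa; exact: prime_coprime_dvd (Hpr pi) cab fa fp.
    have fc : ~~ (pr p %| c) by apply/negP => fc; exact: prime_coprime_dvd (Hpr pi) cbc fp fc.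
    by rewrite -Hlog // lg (logn0 fa) (logn0 fc) addn0.
  exact: pp2 (Hpr qi) fq (Hpr pi).
- exact: has_dvd.
- exact: has_dvd.
- exact: has_dvd.
- move=> i; rewrite mem_iota add0n => /andP[_ ip] fb.
  apply/andP; split; apply/negP => f.
    exact: prime_coprime_dvd (Hpr ip) cab f fb.
  exact: prime_coprime_dvd (Hpr ip) cbc fb f.
- move=> i; rewrite mem_iota add0n => /andP[_ ip].
  have := pr_dvd ip; rewrite -abc !Euclid_dvdM ?Hpr //.
  by case/orP=> [/orP[]|] ->; rewrite ?orbT.
move/eqP=> E p pp' pb.
have [i ip pE] := Hdiv pp' (dvdn_trans pb dB).
have : i \in filter (fun i => pr i %| b) idx by rewrite mem_filter mem_iota add0n ip -pE pb.
by rewrite E inE => /eqP i0; rewrite pE i0.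
Qed.
Lemma two_part x y : pr 0 = 2 -> 0 < size prs -> x * y = n -> coprime x y -> 1 < x ->
  (forall p, prime p -> p %| x -> p = pr 0) -> x = 2 ^ nth 0 exs 0.
Proof.
move=> p0 s0 xy cxy x1 hx.
have x0 : 0 < x by apply: ltnW.
have y0 : 0 < y.
  rewrite lt0n; apply/eqP => y0; move: xy; rewrite y0 muln0 => n0; have := Hex s0.
  by rewrite -Hlog // -n0 lognE /= andbF.
have d2 : 2 %| x by rewrite -p0 -(hx _ (pdiv_prime x1) (pdiv_dvd x)) pdiv_dvd.
have ny : ~~ (2 %| y).
  apply/negP => d2y; exact: (@prime_coprime_dvd 2 x y isT cxy d2 d2y).
have -> : nth 0 exs 0 = logn 2 x by rewrite -Hlog // p0 -xy lognM // (logn0 ny) addn0.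
rewrite -p_part part_pnat_id //; apply/pnatP => // p pp px.
by rewrite inE /= (hx p pp px) p0.
Qed.
End Arith.


Definition np (prs exs : seq nat) s := foldr (fun i acc => nth 0 prs i ^ nth 0 exs i * acc) 1 s.

Section Conc.
Variables (prs exs : seq nat).
Local Notation pr i := (nth 0 prs i).
Local Notation ex i := (nth 0 exs i).

Lemma np_gt0 s : {in s, forall i, prime (pr i)} -> 0 < np prs exs s.
Proof.
elim: s => //= i s IH H; rewrite muln_gt0 expn_gt0 prime_gt0 ?H ?inE ?eqxx //=.
by apply: IH => j js; apply: H; rewrite inE js orbT.
Qed.

Lemma logn_np p s : prime p -> {in s, forall i, prime (pr i)} ->
  logn p (np prs exs s) = sumn [seq (p == pr i) * ex i | i <- s].
Proof.
move=> pp; elim: s => [|i s IH H] /=; first by rewrite logn1.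
have Hs : {in s, forall i, prime (pr i)} by move=> j js; apply: H; rewrite inE js orbT.
have pi : prime (pr i) by apply: H; rewrite inE eqxx.
rewrite [np _ _ _]/= -/(np prs exs s).
have g1 : 0 < pr i ^ ex i by rewrite expn_gt0 (prime_gt0 pi).
rewrite (lognM _ g1 (np_gt0 Hs)) lognX logn_prime // IH //.
by rewrite mulnC.
Qed.

Lemma dvd_np p s : prime p -> {in s, forall i, prime (pr i)} ->
  p %| np prs exs s -> has (fun i => p == pr i) s.
Proof.
move=> pp; elim: s => [|i s IH H] /=; first by move=> _; rewrite /np /= dvdn1 => /eqP p1; rewrite p1 in pp.
have Hs : {in s, forall i, prime (pr i)} by move=> j js; apply: H; rewrite inE js orbT.
have pi : prime (pr i) by apply: H; rewrite inE eqxx.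
rewrite [np _ _ _]/= -/(np prs exs s) Euclid_dvdM // Euclid_dvdX // (dvdn_prime2 pp pi).
by case/orP=> [/andP[-> _] //|/(IH Hs) ->]; rewrite orbT.
Qed.

Hypothesis Hpr : all prime prs.
Hypothesis Hex : all (fun i => 0 < ex i) (iota 0 (size prs)).
Hypothesis Hlg : all (fun i => sumn [seq (pr i == pr j) * ex j | j <- iota 0 (size prs)] == ex i) (iota 0 (size prs)).

Lemma Hpr' i : i < size prs -> prime (pr i).
Proof. by move=> ip; apply: (allP Hpr); rewrite mem_nth. Qed.

Lemma Hpr'' : {in iota 0 (size prs), forall i, prime (pr i)}.
Proof. by move=> i; rewrite mem_iota add0n => /andP[_]; exact: Hpr'. Qed.

Lemma Hex' i : i < size prs -> 0 < ex i.
Proof. by move=> ip; apply: (allP Hex); rewrite mem_iota add0n ip. Qed.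

Lemma Hlog' i : i < size prs -> logn (pr i) (np prs exs (iota 0 (size prs))) = ex i.
Proof.
move=> ip; rewrite logn_np ?Hpr' //; last exact: Hpr''.
by apply/eqP; apply: (allP Hlg); rewrite mem_iota add0n ip.
Qed.

Lemma Hdiv' p : prime p -> p %| np prs exs (iota 0 (size prs)) -> exists2 i, i < size prs & p = pr i.
Proof.
move=> pp /(dvd_np pp Hpr'') /hasP[i]; rewrite mem_iota add0n => /andP[_ ip] /eqP E.
by exists i.
Qed.
End Conc.

Definition prM := [:: 2;3;5;7;11;13;17;19;23;29;31;41;47;59;71].
Definition exM := [:: 46;20;9;6;2;3;1;1;1;1;1;1;1;1;1].
Definition prB := [:: 2;3;5;7;11;13;17;19;23;31;47].
Definition exB := [:: 41;13;6;2;1;1;1;1;1;1;1].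

Lemma M_np : Monster_order = np prM exM (iota 0 (size prM)).
Proof. rewrite /Monster_order /np /=; lia. Qed.
Lemma B_np : BabyMonster_order = np prB exB (iota 0 (size prB)).
Proof. rewrite /BabyMonster_order /np /=; lia. Qed.

Lemma M_chk2 : check2 prM exM. Proof. vm_compute; reflexivity. Qed.
Lemma M_chkF : checkF prM exM. Proof. vm_compute; reflexivity. Qed.
Lemma B_chk2 : check2 prB exB. Proof. vm_compute; reflexivity. Qed.
Lemma B_chkF : checkF prB exB. Proof. vm_compute; reflexivity. Qed.
Lemma M_pr : all prime prM. Proof. vm_compute; reflexivity. Qed.
Lemma B_pr : all prime prB. Proof. vm_compute; reflexivity. Qed.
Lemma M_ex : all (fun i => 0 < nth 0 exM i) (iota 0 (size prM)). Proof. vm_compute; reflexivity. Qed.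
Lemma B_ex : all (fun i => 0 < nth 0 exB i) (iota 0 (size prB)). Proof. vm_compute; reflexivity. Qed.
Lemma M_lg : all (fun i => sumn [seq (nth 0 prM i == nth 0 prM j) * nth 0 exM j | j <- iota 0 (size prM)] == nth 0 exM i) (iota 0 (size prM)).
Proof. vm_compute; reflexivity. Qed.
Lemma B_lg : all (fun i => sumn [seq (nth 0 prB i == nth 0 prB j) * nth 0 exB j | j <- iota 0 (size prB)] == nth 0 exB i) (iota 0 (size prB)).
Proof. vm_compute; reflexivity. Qed.

Lemma dvdZ (c m : nat) (mZ : Z) : c %| m -> Z.of_nat m = mZ -> (Z.of_nat c | mZ)%Z.
Proof. move=> /dvdnP[k ->] <-; exists (Z.of_nat k); lia. Qed.

Lemma M_surv a c : a * 2^46 * c = Monster_order -> c %| 2^46 - 1 -> 2^46 %| a - 1 -> 1 < c -> False.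
Proof.
rewrite /Monster_order => abc c1 c2 c3.
have ac : a * c = 3^20 * 5^9 * 7^6 * 11^2 * 13^3 * 17 * 19 * 23 * 29 * 31 * 41 * 47 * 59 * 71.
  have e : 2^46 * (a * c) = 2^46 * (3^20 * 5^9 * 7^6 * 11^2 * 13^3 * 17 * 19 * 23 * 29 * 31 * 41 * 47 * 59 * 71) by lia.
  have p0 : 0 < 2^46 by rewrite expn_gt0.
  move/eqP: e; rewrite (eqn_pmul2l p0); exact: eqP.
have h1 : (Z.of_nat c | 3^20 * 5^9 * 7^6 * 11^2 * 13^3 * 17 * 19 * 23 * 29 * 31 * 41 * 47 * 59 * 71)%Z.
  apply: (@dvdZ c (a * c)); [exact: dvdn_mull (dvdnn c) | rewrite ac; lia].
have h2 : (Z.of_nat c | 2^46 - 1)%Z by apply: (dvdZ c1); lia.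
have := Z.gcd_greatest _ _ _ h1 h2.
have -> : Z.gcd (3^20 * 5^9 * 7^6 * 11^2 * 13^3 * 17 * 19 * 23 * 29 * 31 * 41 * 47 * 59 * 71) (2^46 - 1) = 141%Z by vm_compute.
case=> t ht.
have : c %| 141.
  apply/dvdnP; exists (Z.to_nat t); nia.
have -> : (c %| 141) = (c \in divisors 141) by rewrite dvdn_divisors.
have -> : divisors 141 = [:: 1; 3; 47; 141] by vm_compute.
rewrite !inE => /or4P[] /eqP E; subst c; lia.
Qed.


Lemma B_surv a c : a * 2^41 * c = BabyMonster_order -> c %| 2^41 - 1 -> 1 < c -> False.
Proof.
rewrite /BabyMonster_order => abc c1 c3.
have ac : a * c = 3^13 * 5^6 * 7^2 * 11 * 13 * 17 * 19 * 23 * 31 * 47.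
  have e : 2^41 * (a * c) = 2^41 * (3^13 * 5^6 * 7^2 * 11 * 13 * 17 * 19 * 23 * 31 * 47) by lia.
  have p0 : 0 < 2^41 by rewrite expn_gt0.
  move/eqP: e; rewrite (eqn_pmul2l p0); exact: eqP.
have h1 : (Z.of_nat c | 3^13 * 5^6 * 7^2 * 11 * 13 * 17 * 19 * 23 * 31 * 47)%Z.
  apply: (@dvdZ c (a * c)); [exact: dvdn_mull (dvdnn c) | rewrite ac; lia].
have h2 : (Z.of_nat c | 2^41 - 1)%Z by apply: (dvdZ c1); lia.
have := Z.gcd_greatest _ _ _ h1 h2.
have -> : Z.gcd (3^13 * 5^6 * 7^2 * 11 * 13 * 17 * 19 * 23 * 31 * 47) (2^41 - 1) = 1%Z by vm_compute.
move/Z.divide_1_r; lia.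
Qed.

Lemma frob_case prs exs h k :
  all prime prs -> all (fun i => 0 < nth 0 exs i) (iota 0 (size prs)) ->
  all (fun i => sumn [seq (nth 0 prs i == nth 0 prs j) * nth 0 exs j | j <- iota 0 (size prs)] == nth 0 exs i) (iota 0 (size prs)) ->
  checkF prs exs -> nth 0 prs 0 = 2 -> 0 < size prs ->
  h * k = np prs exs (iota 0 (size prs)) -> coprime h k -> 1 < h -> 1 < k ->
  (forall q p, prime q -> q %| h -> prime p -> q %| p ^ logn p k - 1) ->
  h = 2 ^ nth 0 exs 0.
Proof.
move=> a1 a2 a3 chk p0 s0 hk chk' h1 k1 pp.
have := arithF (Hpr' a1) (Hlog' a1 a3) (Hdiv' a1) hk _ h1 k1 pp chk.
rewrite coprime_sym chk' => /(_ isT) H.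
exact: (two_part (Hex' a2) (Hlog' a1 a3) p0 s0 hk chk' h1 H).
Qed.

Lemma two_case prs exs a b c :
  all prime prs -> all (fun i => 0 < nth 0 exs i) (iota 0 (size prs)) ->
  all (fun i => sumn [seq (nth 0 prs i == nth 0 prs j) * nth 0 exs j | j <- iota 0 (size prs)] == nth 0 exs i) (iota 0 (size prs)) ->
  check2 prs exs -> nth 0 prs 0 = 2 -> 0 < size prs ->
  a * b * c = np prs exs (iota 0 (size prs)) -> coprime a b -> coprime b c ->
  1 < a -> 1 < b -> 1 < c ->
  (forall q p, prime q -> q %| b -> prime p -> q %| p ^ logn p a - 1) ->
  (forall q p, prime q -> q %| c -> prime p -> q %| p ^ logn p b - 1) ->
  b = 2 ^ nth 0 exs 0.
Proof.
move=> a1 a2 a3 chk p0 s0 abc cab cbc ha hb hc pp1 pp2.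
have H := arith2 (Hpr' a1) (Hex' a2) (Hlog' a1 a3) (Hdiv' a1) abc cab cbc ha hb hc pp1 pp2 chk.
have bac : b * (a * c) = np prs exs (iota 0 (size prs)) by rewrite -abc mulnCA mulnA.
have cb : coprime b (a * c) by rewrite coprimeMr (coprime_sym b a) cab cbc.
exact: (two_part (Hex' a2) (Hlog' a1 a3) p0 s0 bac cb hb H).
Qed.

Section FP.
Local Open Scope group_scope.
Lemma frob_pp (gT : finGroupType) (G K H : {group gT}) q p :
  [Frobenius G = K ><| H] -> prime q -> q %| #|H| -> prime p ->
  q %| p ^ logn p #|K| - 1.
Proof.
move=> frobG pq qH pp.
have [Q sylQ] := Sylow_exists q H.
have sQH := pHall_sub sylQ.
have qQ : q %| #|Q|.
  rewrite (card_Hall sylQ) p_part.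
  by rewrite -{1}(expn1 q) dvdn_exp2l // logn_gt0 mem_primes pq cardG_gt0.
have [defG _ _ _ _] := Frobenius_context frobG.
have [_ _ _ nKH _] := sdprod_context defG.
have nKQ := subset_trans sQH nKH.
have coKQ : coprime #|K| #|Q| := coprimegS sQH (Frobenius_coprime frobG).
have solQ := pgroup_sol (pHall_pgroup sylQ).
have [P sylP nPQ] := sol_coprime_Sylow_exists p solQ nKQ coKQ.
have regPQ : semiregular P Q := semiregularS (pHall_sub sylP) sQH (Frobenius_reg_ker frobG).
have := regular_norm_dvd_pred nPQ regPQ.
rewrite (card_Hall sylP) p_part subn1 => /(dvdn_trans qQ); done.
Qed.
End FP.


Section Groups.
Variable gT : finGroupType.
Local Open Scope group_scope.

Lemma frob_nums (G : {group gT}) : [Frobenius G] ->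
  exists h k, ([/\ h * k = #|G|, coprime h k, 1 < h, 1 < k &
    h %| k - 1 /\ (forall q p, prime q -> q %| h -> prime p -> q %| p ^ logn p k - 1)])%N.
Proof.
case/existsP=> H /vcharacter.Frobenius_kernel_exists [K frobG].
have [defG ntK ntH _ _] := Frobenius_context frobG.
exists #|H|, #|K|; split.
- by rewrite mulnC (sdprod_card defG).
- by rewrite coprime_sym (Frobenius_coprime frobG).
- by rewrite cardG_gt1.
- by rewrite cardG_gt1.
split; first by rewrite subn1; exact: Frobenius_dvd_ker1 frobG.
move=> q p pq qH pp; exact: frob_pp frobG pq qH pp.
Qed.

Lemma two_nums (G : {group gT}) : two_Frobenius G ->
  exists a b c, ([/\ a * b * c = #|G|, coprime a b, coprime b c, 1 < a &
    [/\ 1 < b, 1 < c, c %| b - 1, b %| a - 1 &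
     (forall q p, prime q -> q %| b -> prime p -> q %| p ^ logn p a - 1) /\
     (forall q p, prime q -> q %| c -> prime p -> q %| p ^ logn p b - 1)]])%N.
Proof.
case=> A [B [nAG nBG sAB /existsP[H1 f1] /existsP[H2 f2]]].
have [defB ntA ntH1 _ _] := Frobenius_context f1.
have [defGA ntBA ntH2 _ _] := Frobenius_context f2.
have nAB : B \subset 'N(A) := subset_trans (normal_sub nBG) (normal_norm nAG).
have oBA : #|B / A| = #|H1|.
  rewrite (card_quotient nAB); apply/eqP; rewrite -(@eqn_pmul2l #|A|) ?cardG_gt0 //.
  by rewrite (Lagrange sAB) (sdprod_card defB).
have oG : #|G| = (#|A| * (#|H1| * #|H2|))%N.
  rewrite -(Lagrange (normal_sub nAG)) -(card_quotient (normal_norm nAG)).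
  by rewrite -(sdprod_card defGA) oBA.
exists #|A|, #|H1|, #|H2|; split.
- by rewrite oG mulnA.
- exact: Frobenius_coprime f1.
- by rewrite -oBA; exact: Frobenius_coprime f2.
- by rewrite cardG_gt1.
split.
- by rewrite cardG_gt1.
- by rewrite cardG_gt1.
- by rewrite subn1 -oBA; exact: Frobenius_dvd_ker1 f2.
- by rewrite subn1; exact: Frobenius_dvd_ker1 f1.
split.
- move=> q p pq qH pp; exact: frob_pp f1 pq qH pp.
- move=> q p pq qH pp; rewrite -oBA; exact: frob_pp f2 pq qH pp.
Qed.
End Groups.

Lemma u2M k : 2^46 * k = Monster_order -> k = 3^20 * 5^9 * 7^6 * 11^2 * 13^3 * 17 * 19 * 23 * 29 * 31 * 41 * 47 * 59 * 71.
Proof.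
rewrite /Monster_order => hk.
have e : 2^46 * k = 2^46 * (3^20 * 5^9 * 7^6 * 11^2 * 13^3 * 17 * 19 * 23 * 29 * 31 * 41 * 47 * 59 * 71) by lia.
have p0 : 0 < 2^46 by rewrite expn_gt0.
move/eqP: e; rewrite (eqn_pmul2l p0) => /eqP ke; exact ke.
Qed.
Lemma u3M k : k = 3^20 * 5^9 * 7^6 * 11^2 * 13^3 * 17 * 19 * 23 * 29 * 31 * 41 * 47 * 59 * 71 -> 2^46 %| k - 1 -> False.
Proof. move=> ke dk; lia. Qed.
Lemma finM h k : h * k = Monster_order -> h = 2^46 -> h %| k - 1 -> False.
Proof. move=> hk E dk; subst h; exact (u3M (u2M hk) dk). Qed.

Lemma u2B k : 2^41 * k = BabyMonster_order -> k = 3^13 * 5^6 * 7^2 * 11 * 13 * 17 * 19 * 23 * 31 * 47.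
Proof.
rewrite /BabyMonster_order => hk.
have e : 2^41 * k = 2^41 * (3^13 * 5^6 * 7^2 * 11 * 13 * 17 * 19 * 23 * 31 * 47) by lia.
have p0 : 0 < 2^41 by rewrite expn_gt0.
move/eqP: e; rewrite (eqn_pmul2l p0) => /eqP ke; exact ke.
Qed.
Lemma u3B k : k = 3^13 * 5^6 * 7^2 * 11 * 13 * 17 * 19 * 23 * 31 * 47 -> 2^41 %| k - 1 -> False.
Proof. move=> ke dk; lia. Qed.
Lemma finB h k : h * k = BabyMonster_order -> h = 2^41 -> h %| k - 1 -> False.
Proof. move=> hk E dk; subst h; exact (u3B (u2B hk) dk). Qed.

Lemma fin2M a b c : a * b * c = Monster_order -> b = 2^46 -> c %| b - 1 -> b %| a - 1 -> 1 < c -> False.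
Proof. move=> abc E dc db hc; subst b; exact (M_surv abc dc db hc). Qed.
Lemma fin2B a b c : a * b * c = BabyMonster_order -> b = 2^41 -> c %| b - 1 -> 1 < c -> False.
Proof. move=> abc E dc hc; subst b; exact (B_surv abc dc hc). Qed.

Lemma frobM h k : h * k = Monster_order -> coprime h k -> 1 < h -> 1 < k -> h %| k - 1 ->
  (forall q p, prime q -> q %| h -> prime p -> q %| p ^ logn p k - 1) -> False.
Proof.
move=> hk chk h1 k1 dk pp.
have E := frob_case M_pr M_ex M_lg M_chkF erefl isT (etrans hk M_np) chk h1 k1 pp.
exact: (finM hk E dk).
Qed.

Lemma frobB h k : h * k = BabyMonster_order -> coprime h k -> 1 < h -> 1 < k -> h %| k - 1 ->
  (forall q p, prime q -> q %| h -> prime p -> q %| p ^ logn p k - 1) -> False.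
Proof.
move=> hk chk h1 k1 dk pp.
have E := frob_case B_pr B_ex B_lg B_chkF erefl isT (etrans hk B_np) chk h1 k1 pp.
exact: (finB hk E dk).
Qed.

Lemma twoM a b c : a * b * c = Monster_order -> coprime a b -> coprime b c ->
  1 < a -> 1 < b -> 1 < c -> c %| b - 1 -> b %| a - 1 ->
  (forall q p, prime q -> q %| b -> prime p -> q %| p ^ logn p a - 1) ->
  (forall q p, prime q -> q %| c -> prime p -> q %| p ^ logn p b - 1) -> False.
Proof.
move=> abc cab cbc ha hb hc dc db pp1 pp2.
have E := two_case M_pr M_ex M_lg M_chk2 erefl isT (etrans abc M_np) cab cbc ha hb hc pp1 pp2.
exact: (fin2M abc E dc db hc).
Qed.

Lemma twoB a b c : a * b * c = BabyMonster_order -> coprime a b -> coprime b c ->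
  1 < a -> 1 < b -> 1 < c -> c %| b - 1 ->
  (forall q p, prime q -> q %| b -> prime p -> q %| p ^ logn p a - 1) ->
  (forall q p, prime q -> q %| c -> prime p -> q %| p ^ logn p b - 1) -> False.
Proof.
move=> abc cab cbc ha hb hc dc pp1 pp2.
have E := two_case B_pr B_ex B_lg B_chk2 erefl isT (etrans abc B_np) cab cbc ha hb hc pp1 pp2.
exact: (fin2B abc E dc hc).
Qed.

Local Open Scope group_scope.

Theorem lemma2p12 (gT : finGroupType) (G : {group gT}) :
  (#|G| = Monster_order \/ #|G| = BabyMonster_order) ->
  ~ [Frobenius G] /\ ~ two_Frobenius G.
Proof.
move=> HG; split.
- move/frob_nums=> [h [k [hk chk h1 k1 [dk pp]]]].
  case: HG => HG; rewrite HG in hk; [exact: frobM hk chk h1 k1 dk pp | exact: frobB hk chk h1 k1 dk pp].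
- move/two_nums=> [a [b [c [abc cab cbc ha [hb hc dc db [pp1 pp2]]]]]].
  case: HG => HG; rewrite HG in abc; [exact: twoM abc cab cbc ha hb hc dc db pp1 pp2 | exact: twoB abc cab cbc ha hb hc dc pp1 pp2].
Qed.
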